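(* Let $\kappa\ge1$, $n=2^\kappa-1$, $0<\epsilon<1$, and let $G_{\mathrm{simp}}$ be a binary $\kappa\times n$ matrix whose columns are exactly the $2^\kappa-1$ nonzero vectors of $\mathbb{F}_2^\kappa$ (the simplex code generator). Then for every binary $\kappa\times n$ matrix $G$, $\lambda(n,\epsilon,q(G_{\mathrm{simp}}))\le\lambda(n,\epsilon,q(G))$.
   Context: $W=\mathbb{F}_2^\kappa$; $\nu(i)\in W$ is the binary expansion of $i\in\{0,\dots,2^\kappa-1\}$. For a binary $\kappa\times n$ matrix $G$, $q(G)=(q_0,\dots,q_{2^\kappa-1})$ with $q_i$ the number of columns of $G$ equal to $\nu(i)$ divided by $n$. For a subspace $S\subseteq W$, $\zeta(S,q)=\sum_{i:\nu(i)\in S}q_i$; $\Xi(W,\kappa-1)$ is the set of $(\kappa-1)$-dimensional subspaces of $W$. $\lambda(n,\epsilon,q)=(2-\epsilon)^n2^{-\kappa}\Big(1+\sum_{S\in\Xi(W,\kappa-1)}\big(\tfrac{\epsilon}{2-\epsilon}\big)^{n(1-\zeta(S,q))}\Big)-1$, which for $q=q(G)$ is the $\chi^2$ divergence between $p_{MZ}$ and $p_Mp_Z$ for the coset code with base-code generator $G$ (uniform message) over a binary erasure channel with erasure probability $\epsilon$. *)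

(* Defs.v *)
From HB Require Import structures.
From mathcomp Require Import all_boot all_order all_algebra.
From mathcomp Require Import reals exp.
Set Implicit Arguments. Unset Strict Implicit. Unset Printing Implicit Defensive.
Import Order.TTheory GRing.Theory Num.Theory.
Local Open Scope ring_scope.

(* W = F_2^kappa, represented as row vectors 'rV['F_2]_kappa. *)

Definition nu (kappa : nat) (i : 'I_(2 ^ kappa)) : 'rV['F_2]_kappa :=
  \row_(k < kappa) ((odd (i %/ 2 ^ k))%:R : 'F_2).

Definition qvec (R : realType) (kappa n : nat) (G : 'M['F_2]_(kappa, n))
  (i : 'I_(2 ^ kappa)) : R :=
  (#|[set j : 'I_n | (col j G)^T == nu i]|)%:R / n%:R.

(* Xi(W, kappa-1): the (kappa-1)-dimensional subspaces of W, each represented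
   canonically by its generated square matrix <<A>>%MS. *)
Definition Xi (kappa : nat) : {set 'M['F_2]_kappa} :=
  [set (<<A>>)%MS | A in [set A : 'M['F_2]_kappa | \rank A == kappa.-1]].

Definition zeta (R : realType) (kappa : nat) (S : 'M['F_2]_kappa)
  (q : 'I_(2 ^ kappa) -> R) : R :=
  \sum_(i < 2 ^ kappa | (nu i <= S)%MS) q i.

Definition lambda (R : realType) (kappa n : nat) (eps : R)
  (q : 'I_(2 ^ kappa) -> R) : R :=
  (2 - eps) ^+ n * (2 ^+ kappa)^-1 *
    (1 + \sum_(S in Xi kappa) (eps / (2 - eps)) `^ (n%:R * (1 - zeta S q))) - 1.

Definition is_simplex (kappa n : nat) (G : 'M['F_2]_(kappa, n)) : Prop :=
  forall v : 'rV['F_2]_kappa, #|[set j : 'I_n | (col j G)^T == v]| = (v != 0 : nat).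

(* Main.v *)
Require Import Defs.
From HB Require Import structures.
From mathcomp Require Import all_boot all_order all_algebra.
From mathcomp Require Import reals sequences exp.
From mathcomp Require Import mxabelem.
From mathcomp Require Import zify.
Import Order.TTheory GRing.Theory Num.Theory.
Local Open Scope ring_scope.

Lemma bits_eq (k i j : nat) : (i < 2 ^ k)%N -> (j < 2 ^ k)%N ->
  (forall b, (b < k)%N -> odd (i %/ 2 ^ b)%N = odd (j %/ 2 ^ b)%N) -> i = j.
Proof.
elim: k i j => [|k IH] i j.
  by rewrite expn0 !ltnS !leqn0 => /eqP -> /eqP ->.
move=> hi hj hb.
have h0 := hb 0%N (ltn0Sn _); rewrite expn0 !divn1 in h0.
have hh : i./2 = j./2.
  apply: IH.
  - by rewrite -divn2 ltn_divLR // -expnSr.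
  - by rewrite -divn2 ltn_divLR // -expnSr.
  move=> b hbk; rewrite -!divn2 -!divnMA -!expnS; exact: hb.
by rewrite -(odd_double_half i) -(odd_double_half j) h0 hh.
Qed.


Lemma nu_inj k : injective (@nu k).
Proof.
move=> i j /rowP H; apply/val_inj => /=; apply: (bits_eq _ _ _ (ltn_ord i) (ltn_ord j)) => b hb.
move: (H (Ordinal hb)); rewrite !mxE.
by case: odd; case: odd => //= /eqP; rewrite ?oner_eq0 // eq_sym oner_eq0.
Qed.

Lemma nu_bij k : bijective (@nu k).
Proof.
apply: inj_card_bij; first exact: nu_inj.
by rewrite card_mx !card_ord mul1n.
Qed.

Lemma count_part (n k : nat) (f : 'I_n -> 'rV['F_2]_k) (P : pred 'rV['F_2]_k) :
  (\sum_(v | P v) #|[set j | f j == v]|)%N = #|[set j | P (f j)]|.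
Proof.
rewrite -sum1_card (partition_big f P) /=; last by move=> j; rewrite inE.
apply: eq_bigr => v Pv; rewrite -sum1_card; apply: eq_bigl => j.
by rewrite !inE; case: eqP => [->|]; rewrite ?Pv ?andbF.
Qed.

Set Implicit Arguments. Unset Strict Implicit.
Definition cnt k n (G : 'M['F_2]_(k, n)) (S : 'M['F_2]_k) :=
  #|[set j : 'I_n | ((col j G)^T <= S)%MS]|.
Definition mcnt k n (G : 'M['F_2]_(k, n)) (S : 'M['F_2]_k) :=
  #|[set j : 'I_n | ~~ ((col j G)^T <= S)%MS]|.

Lemma cnt_mcnt k n (G : 'M['F_2]_(k, n)) S : (cnt G S + mcnt G S = n)%N.
Proof.
rewrite /cnt /mcnt.
have -> : [set j : 'I_n | ~~ ((col j G)^T <= S)%MS] = ~: [set j | ((col j G)^T <= S)%MS].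
  by apply/setP => j; rewrite !inE.
by rewrite cardsC card_ord.
Qed.

Lemma zetaE (R : realType) k n (G : 'M['F_2]_(k, n)) S :
  zeta S (qvec R G) = (cnt G S)%:R / n%:R.
Proof.
rewrite /zeta /qvec -mulr_suml -natr_sum /cnt.
rewrite -(@count_part n k (fun j => (col j G)^T) (fun v => (v <= S)%MS)).
rewrite (reindex (@nu k)) //=; exact: onW_bij (nu_bij k).
Qed.

From mathcomp Require Import ring lra.


Lemma expE (R : realType) k n (G : 'M['F_2]_(k, n)) S : (0 < n)%N ->
  n%:R * (1 - zeta S (qvec R G)) = (mcnt G S)%:R :> R.
Proof.
move=> n0; rewrite zetaE -{1 3}(cnt_mcnt G S) natrD.
have : (cnt G S + mcnt G S)%:R != 0 :> R by rewrite cnt_mcnt pnatr_eq0 -lt0n.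
rewrite natrD => h; field.
exact: h.
Qed.

Definition hh k (v : 'rV['F_2]_k) := #|[set S in Xi k | ~~ (v <= S)%MS]|.

Lemma sum_mcnt k n (G : 'M['F_2]_(k, n)) :
  (\sum_(S in Xi k) mcnt G S = \sum_(j < n) hh (col j G)^T)%N.
Proof.
transitivity (\sum_(S in Xi k) \sum_(j < n) (~~ ((col j G)^T <= S)%MS : nat))%N.
  apply: eq_bigr => S _; rewrite /mcnt -sum1_card big_mkcond /=.
  by apply: eq_bigr => j _; rewrite inE; case: (~~ _).
rewrite exchange_big /=; apply: eq_bigr => j _.
rewrite /hh -sum1_card [RHS]big_mkcond [LHS]big_mkcond /=.
by apply: eq_bigr => S _; rewrite inE; case: (S \in Xi k); case: (~~ _).
Qed.

Lemma hh0 k : hh (0 : 'rV['F_2]_k) = 0%N.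
Proof.
rewrite /hh; apply/eqP; rewrite cards_eq0; apply/eqP/setP => S.
by rewrite !inE sub0mx andbF.
Qed.

Lemma rV_rep (F : fieldType) k (v : 'rV[F]_k) : v != 0 ->
  exists2 M, M \in unitmx & v = pid_mx 1 *m M.
Proof.
move=> nz; have r1 : \rank v = 1%N by rewrite rank_rV nz.
set c := col_ebase v 0 0.
have hc : c != 0.
  by have := col_ebase_unit v; rewrite unitmxE det_mx11 unitfE.
exists (c%:M *m row_ebase v).
  by rewrite unitmx_mul row_ebase_unit andbT unitmxE det_scalar unitfE expf_neq0.
rewrite -{1}(mulmx_ebase v) r1 [col_ebase v]mx11_scalar -/c.
by rewrite mul_scalar_mx mulmxA mul_mx_scalar.
Qed.

Lemma rV_trans (F : fieldType) k (v u : 'rV[F]_k) : v != 0 -> u != 0 ->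
  exists2 M, M \in unitmx & v *m M = u.
Proof.
move=> /rV_rep [Mv Uv ->] /rV_rep [Mu Uu ->].
exists (invmx Mv *m Mu); first by rewrite unitmx_mul unitmx_inv Uv.
by rewrite mulmxA mulmxK.
Qed.

Lemma Xi_gen k S : S \in Xi k -> <<S>>%MS = S.
Proof. by case/imsetP => A _ ->; rewrite genmx_id. Qed.

Lemma hh_le k (v u : 'rV['F_2]_k) : v != 0 -> u != 0 -> (hh v <= hh u)%N.
Proof.
move=> nv nu; have [M UM vMu] := rV_trans nv nu.
have fM : row_free M by rewrite row_free_unit.
pose T := fun S : 'M['F_2]_k => (<<S *m M>>)%MS.
rewrite /hh -(card_in_imset (f := T)).
  apply: subset_leq_card; apply/subsetP => S' /imsetP [S].
  rewrite inE => /andP [SX vS] ->; rewrite inE; apply/andP; split.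
    case/imsetP: SX => A; rewrite inE => rA ->.
    apply/imsetP; exists (<<A>> *m M)%MS => //.
    by rewrite inE mxrankMfree // mxrank_gen.
  by rewrite genmxE -vMu submxMfree.
move=> S1 S2; rewrite !inE => /andP [S1X _] /andP [S2X _].
move=> /genmxP; rewrite !submxMfree // => /genmxP.
by rewrite (Xi_gen S1X) (Xi_gen S2X).
Qed.

Lemma simp_nz k n (Gs : 'M['F_2]_(k, n)) j : is_simplex Gs -> (col j Gs)^T != 0.
Proof.
move=> H; have := H (col j Gs)^T; case: eqP => // _ /eqP.
by rewrite cards_eq0 => /eqP /setP /(_ j); rewrite !inE eqxx.
Qed.

Lemma mcnt_simp k n (Gs : 'M['F_2]_(k, n)) S : is_simplex Gs -> S \in Xi k ->
  mcnt Gs S = (#|{: 'rV['F_2]_k}| - #|'F_2| ^ k.-1)%N.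
Proof.
move=> H SX; rewrite /mcnt.
rewrite -(@count_part n k (fun j => (col j Gs)^T) (fun v => ~~ (v <= S)%MS)).
under eq_bigr => v _ do rewrite H.
transitivity #|~: rowg S|.
  rewrite -sum1_card; apply: eq_big => v; first by rewrite !inE.
  by case: eqP => // -> ; rewrite sub0mx.
have := cardsC (rowg S); rewrite card_rowg.
case/imsetP: SX => A; rewrite inE => /eqP rA ->; rewrite mxrank_gen rA => <-.
by rewrite addKn.
Qed.

Lemma sum_le k n (Gs G : 'M['F_2]_(k, n)) : is_simplex Gs ->
  (\sum_(S in Xi k) mcnt G S <= \sum_(S in Xi k) mcnt Gs S)%N.
Proof.
move=> H; rewrite !sum_mcnt; apply: leq_sum => j _.
have [->|nz] := eqVneq (col j G)^T 0; first by rewrite hh0.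
exact: hh_le nz (simp_nz j H).
Qed.

Lemma tangent (R : realType) (a y c : R) : 0 < a ->
  a `^ c + a `^ c * ln a * (y - c) <= a `^ y.
Proof.
move=> a0; rewrite /powR gt_eqF //.
have -> : y * ln a = c * ln a + (y - c) * ln a by ring.
rewrite expRD -mulrA -{1}(mulr1 (expR (c * ln a))) -mulrDr.
apply: ler_wpM2l; first exact: expR_ge0.
rewrite [ln a * _]mulrC; exact: expR_ge1Dx.
Qed.

Unset Implicit Arguments. Set Strict Implicit.
Theorem corollary3 (R : realType) (kappa : nat) (eps : R)
  (Gsimp G : 'M['F_2]_(kappa, (2 ^ kappa).-1)) :
  (1 <= kappa)%N -> 0 < eps -> eps < 1 ->
  is_simplex Gsimp ->
  lambda (2 ^ kappa).-1 eps (qvec R Gsimp) <= lambda (2 ^ kappa).-1 eps (qvec R G).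
Proof.
move=> k1 e0 e1 Hs.
have n0 : (0 < (2 ^ kappa).-1)%N.
  have : (1 < 2 ^ kappa)%N by rewrite -[X in (X < _)%N](expn0 2) ltn_exp2l.
  lia.
rewrite /lambda lerD2r; apply: ler_wpM2l.
  apply: mulr_ge0; first by apply: exprn_ge0; lra.
  by rewrite invr_ge0 exprn_ge0.
rewrite lerD2l.
under eq_bigr => S _ do rewrite expE //.
under [X in _ <= X]eq_bigr => S _ do rewrite expE //.
set a := eps / (2 - eps).
have a0 : 0 < a by rewrite /a divr_gt0 //; lra.
have a1 : a <= 1 by rewrite /a ler_pdivrMr; lra.
have la : ln a <= 0 by exact: ln_le0.
set c := (#|{: 'rV['F_2]_kappa}| - #|'F_2| ^ kappa.-1)%N.
apply: (@le_trans _ _ (\sum_(S in Xi kappa)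
   (a `^ c%:R + a `^ c%:R * ln a * ((mcnt G S)%:R - (mcnt Gsimp S)%:R)))).
  rewrite big_split /= -mulr_sumr.
  under [X in X <= _]eq_bigr => S hS do rewrite (mcnt_simp Hs hS) -/c.
  rewrite lerDl; apply: mulr_le0.
    by apply: mulr_ge0_le0 => //; exact: powR_ge0.
  rewrite sumrB -!natr_sum subr_le0 ler_nat; exact: sum_le.
apply: ler_sum => S hS; rewrite (mcnt_simp Hs hS) -/c; exact: tangent.
Qed.
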